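(* For every triple of partitions $\lambda=(\lambda^{(1)},\lambda^{(2)},\lambda^{(3)})\vdash_n d$ one has $k(\lambda)\le N(\lambda)$.
   Context: $\lambda\vdash_n d$ means each $\lambda^{(k)}$ is a partition of $d$ with at most $n$ nonzero parts. The Kronecker coefficient $k(\lambda)$ is the dimension of the space of $S_d$-invariants in $[\lambda^{(1)}]\otimes[\lambda^{(2)}]\otimes[\lambda^{(3)}]$, where $[\mu]$ is the irreducible (Specht) representation of the symmetric group $S_d$ indexed by $\mu$; equivalently it is the dimension of the space of highest weight vectors of weight $\lambda^*$ in $\mathrm{Sym}^d\bigotimes^3(\mathbb C^n)^*$. An obstruction design is a subset $\mathcal H\subseteq[\ell_1]\times[\ell_2]\times[\ell_3]$; its $k$-slices are the nonempty sets $\{x\in\mathcal H:x_k=i\}$, and its type is $(\lambda^{(1)},\lambda^{(2)},\lambda^{(3)})$ where $\lambda^{(k)}$ is the transpose of the partition obtained by sorting the $k$-slice sizes nonincreasingly. Let $\ell_k=\lambda^{(k)}_1$. $N(\lambda)$ is the number of orbits, under the natural action of $S_{\ell_1}\times S_{\ell_2}\times S_{\ell_3}$ permuting coordinates in each direction, of the set of obstruction designs $\mathcal H\subseteq[\ell_1]\times[\ell_2]\times[\ell_3]$ of type $\lambda$. *)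

(* Defs.v *)
From HB Require Import structures.
From mathcomp Require Import all_boot all_order all_algebra all_fingroup all_field.
Set Implicit Arguments. Unset Strict Implicit. Unset Printing Implicit Defensive.
Import GRing.Theory.

Definition is_part_of (n d : nat) (la : seq nat) : bool :=
  [&& sorted geq la, all (fun x => 0 < x) la, sumn la == d & size la <= n].

Definition conj_part (la : seq nat) : seq nat :=
  [seq count (fun x => j < x) la | j <- iota 0 (head 0 la)].

Definition cells (la : seq nat) : seq (nat * nat) :=
  flatten [seq [seq (i, j) | j <- iota 0 (nth 0 la i)] | i <- iota 0 (size la)].
Definition rowb (la : seq nat) (b : nat) : nat := (nth (0, 0) (cells la) b).1.
Definition colb (la : seq nat) (b : nat) : nat := (nth (0, 0) (cells la) b).2.

(* A tabloid of content in [d] : a function from entries to row indices. *)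
Definition tabloid (d : nat) := {ffun 'I_d -> 'I_d.+1}.

(* A Young tableau of shape la (|la| = d) is a bijection p : cells -> entries,
   cells being numbered 0..d-1 in row-reading order; its tabloid {t}. *)
Definition tabloid_of (la : seq nat) (d : nat) (p : 'S_d) : tabloid d :=
  [ffun x => inord (rowb la (p^-1 x)%g)].

Local Open Scope ring_scope.
(* the permutation module M^la is spanned by tabloids; we work in the space
   of all functions tabloid d -> C *)
Definition Mspace (d : nat) := {ffun tabloid d -> algC^o}.

Definition delta_tab (d : nat) (T : tabloid d) : Mspace d :=
  [ffun T' => ((T' == T)%:R)%R].

(* polytabloid e_t = sum_{pi in column stabilizer} sgn(pi) {pi t};
   q ranges over permutations of cells preserving columns; the tableau
   "t composed with q" is (q * p)%g (which maps cell b to p (q b)). *)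
Definition polytabloid (la : seq nat) (d : nat) (p : 'S_d) : Mspace d :=
  \sum_(q : 'S_d | [forall b : 'I_d, colb la (q b) == colb la b])
     ((-1) ^+ odd_perm q) *: delta_tab (tabloid_of la (mulg q p)).

(* triple tensor products, realised as functions on triples of tabloids *)
Definition Wspace (d : nat) := {ffun (tabloid d * tabloid d * tabloid d) -> algC^o}.

Definition tens3 (d : nat) (f1 f2 f3 : Mspace d) : Wspace d :=
  [ffun T => (f1 T.1.1 * f2 T.1.2 * f3 T.2)%R].

Local Close Scope ring_scope.
Definition specht3 (la1 la2 la3 : seq nat) (d : nat) : {vspace Wspace d} :=
  <<flatten [seq [seq tens3 (polytabloid la1 p1) (polytabloid la2 p2) (polytabloid la3 p3)
     | p2 <- enum [set: 'S_d], p3 <- enum [set: 'S_d]] | p1 <- enum [set: 'S_d]]>>%VS.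

Definition act_tab (d : nat) (s : 'S_d) (T : tabloid d) : tabloid d :=
  [ffun x => T (s^-1 x)%g].
Definition act_W (d : nat) (s : 'S_d) (F : Wspace d) : Wspace d :=
  [ffun T => F (act_tab s^-1 T.1.1, act_tab s^-1 T.1.2, act_tab s^-1 T.2)%g].

Definition kronecker (la1 la2 la3 : seq nat) : nat :=
  let d := sumn la1 in
  \dim (specht3 la1 la2 la3 d :&:
        \bigcap_(s : 'S_d) fixedSpace (linfun (act_W s)))%VS.

Definition design (l1 l2 l3 : nat) := {set 'I_l1 * 'I_l2 * 'I_l3}.

Definition coord (l1 l2 l3 : nat) (k : nat) (x : 'I_l1 * 'I_l2 * 'I_l3) : nat :=
  if k == 1 then val x.1.1 else if k == 2 then val x.1.2 else val x.2.

Definition slice_sizes (l1 l2 l3 : nat) (H : design l1 l2 l3) (k : nat) : seq nat :=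
  [seq m <- [seq #|[set x in H | coord k x == i]|
             | i <- iota 0 (maxn l1 (maxn l2 l3))] | 0 < m].

Definition design_type (l1 l2 l3 : nat) (H : design l1 l2 l3) (k : nat) : seq nat :=
  conj_part (sort geq (slice_sizes H k)).

Definition has_type (l1 l2 l3 : nat) (H : design l1 l2 l3)
  (la1 la2 la3 : seq nat) : bool :=
  [&& design_type H 1 == la1, design_type H 2 == la2 & design_type H 3 == la3].

Definition act_design (l1 l2 l3 : nat) (p1 : 'S_l1) (p2 : 'S_l2) (p3 : 'S_l3)
  (H : design l1 l2 l3) : design l1 l2 l3 :=
  [set (p1 x.1.1, p2 x.1.2, p3 x.2) | x in H].

Definition num_orbits (la1 la2 la3 : seq nat) : nat :=
  let l1 := head 0 la1 in let l2 := head 0 la2 in let l3 := head 0 la3 in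
  let D := [set H : design l1 l2 l3 | has_type H la1 la2 la3] in
  #|[set [set H' in D | [exists p1 : 'S_l1, exists p2 : 'S_l2, exists p3 : 'S_l3,
                           H' == act_design p1 p2 p3 H]] | H in D]|.

(* Main.v *)
Require Import Defs.
From HB Require Import structures.
From mathcomp Require Import all_boot all_order all_algebra all_fingroup all_field.
From mathcomp Require Import zify ring.
Set Implicit Arguments. Unset Strict Implicit. Unset Printing Implicit Defensive.


Import GRing.Theory.

Definition colpres (la : seq nat) (d : nat) (q : 'S_d) : bool :=
  [forall b : 'I_d, colb la (q b) == colb la b].
Definition rowpres (la : seq nat) (d : nat) (q : 'S_d) : bool :=
  [forall b : 'I_d, rowb la (q b) == rowb la b].

Lemma colpresP la d (q : 'S_d) : reflect (forall b, colb la (q b) = colb la b) (colpres la q).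
Proof. by apply: (iffP forallP) => H b; apply/eqP. Qed.
Lemma rowpresP la d (q : 'S_d) : reflect (forall b, rowb la (q b) = rowb la b) (rowpres la q).
Proof. by apply: (iffP forallP) => H b; apply/eqP. Qed.

Lemma colpresM la d (q1 q2 : 'S_d) : colpres la q1 -> colpres la q2 -> colpres la (q1 * q2)%g.
Proof. by move=> /colpresP h1 /colpresP h2; apply/colpresP=> b; rewrite permM h2 h1. Qed.
Lemma colpresV la d (q : 'S_d) : colpres la q -> colpres la q^-1%g.
Proof. by move=> /colpresP h; apply/colpresP=> b; rewrite -{2}(permKV q b) h. Qed.

Lemma tabloid_of_rowpres la d (r p : 'S_d) : rowpres la r ->
  tabloid_of la (r * p)%g = tabloid_of la p.
Proof.
move=> /rowpresP h; apply/ffunP=> x; rewrite !ffunE invMg permM; set y := (p^-1)%g x.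
by rewrite -{2}(permKV r y) h.
Qed.

Lemma tabloid_of_act la d (p s : 'S_d) :
  tabloid_of la (p * s)%g = act_tab s (tabloid_of la p).
Proof. by apply/ffunP=> x; rewrite !ffunE invMg permM. Qed.

Lemma act_tabK d (s : 'S_d) : cancel (act_tab s) (act_tab s^-1%g).
Proof. by move=> T; apply/ffunP=> x; rewrite !ffunE invgK permK. Qed.
Lemma act_tabKV d (s : 'S_d) : cancel (act_tab s^-1%g) (act_tab s).
Proof. by move=> T; apply/ffunP=> x; rewrite !ffunE invgK permKV. Qed.

Lemma eq_act d (s : 'S_d) (U V : tabloid d) :
  (U == act_tab s V) = (act_tab s^-1%g U == V).
Proof.
apply/idP/idP => /eqP h; apply/eqP.
  by rewrite h act_tabK.
by rewrite -h act_tabKV.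
Qed.

Local Open Scope ring_scope.
Definition sgnp d (q : 'S_d) : algC := (-1) ^+ odd_perm q.

Lemma pt_col la d (c p : 'S_d) : colpres la c ->
  polytabloid la (c * p)%g = sgnp c *: polytabloid la p.
Proof.
move=> hc; rewrite /polytabloid scaler_sumr.
rewrite (reindex_inj (mulIg c^-1%g)) /=.
apply: eq_big => [q|q hq].
  apply/idP/idP => h.
    by rewrite -(mulgKV c q); apply: colpresM => //; apply: colpresV.
  by apply: colpresM => //; apply: colpresV.
rewrite -mulgA mulKg /sgnp odd_permM odd_permV signr_addb.
apply/ffunP=> T; rewrite !ffunE /=.
by rewrite /GRing.scale /= mulrA [_ * (-1) ^+ c]mulrC.
Qed.

Definition colmap (la : seq nat) (d : nat) (r : 'S_d) : Prop :=
  forall x y : 'I_d, (colb la (r x) == colb la (r y)) = (colb la x == colb la y).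

Lemma pt_row la d (r p : 'S_d) : rowpres la r -> colmap la r ->
  polytabloid la (r * p)%g = polytabloid la p.
Proof.
move=> hr hc; rewrite /polytabloid.
rewrite (reindex_inj (h := fun q => (r * q * r^-1)%g)); last first.
  by move=> q1 q2 /= /mulIg /mulgI.
apply: eq_big => [q|q hq] /=.
  apply/forallP/forallP => h b.
    have := h (r^-1%g b); rewrite !permM permKV.
    rewrite -(hc (r^-1 %g _) (r^-1 %g b)) !permKV.
    by [].
  rewrite !permM -(hc (r^-1 %g _) b) !permKV.
  exact: h.
rewrite -!mulgA mulKg (@tabloid_of_rowpres la d r (q * p)%g hr).
by rewrite !odd_permM odd_permV addbC -addbA addbb addbF.
Qed.

Lemma pt_actE la d (p s : 'S_d) (U : tabloid d) :
  polytabloid la (p * s)%g U = polytabloid la p (act_tab s^-1%g U).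
Proof.
rewrite /polytabloid !sum_ffunE; apply: eq_bigr => q _.
rewrite !ffunE mulgA (tabloid_of_act la (q * p)%g s).
congr (_ *: _%:R).
by rewrite -(inj_eq (can_inj (@act_tabKV d s))) act_tabK.
Qed.

Lemma tens3E d (f1 f2 f3 : Mspace d) T :
  tens3 f1 f2 f3 T = f1 T.1.1 * f2 T.1.2 * f3 T.2.
Proof. rewrite ffunE; reflexivity. Qed.
Lemma act_WE d (s : 'S_d) (F : Wspace d) T :
  act_W s F T = F (act_tab s^-1 T.1.1, act_tab s^-1 T.1.2, act_tab s^-1 T.2)%g.
Proof. rewrite ffunE; reflexivity. Qed.

Definition X3 (la1 la2 la3 : seq nat) d (p1 p2 p3 : 'S_d) : Wspace d :=
  tens3 (polytabloid la1 p1) (polytabloid la2 p2) (polytabloid la3 p3).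

Lemma act_X3 la1 la2 la3 d (p1 p2 p3 s : 'S_d) :
  act_W s (X3 la1 la2 la3 p1 p2 p3) = X3 la1 la2 la3 (p1 * s)%g (p2 * s)%g (p3 * s)%g.
Proof.
apply/ffunP=> T; rewrite act_WE /X3. rewrite [LHS]tens3E [RHS]tens3E.
rewrite 3![in RHS]pt_actE; reflexivity.
Qed.

Lemma act_tabM d (a b : 'S_d) T : act_tab a (act_tab b T) = act_tab (b * a)%g T.
Proof. by apply/ffunP=> x; rewrite !ffunE invMg permM. Qed.

Lemma act_WM d (s s' : 'S_d) F : act_W s (act_W s' F) = act_W (s' * s)%g F.
Proof. apply/ffunP=> T; rewrite [LHS]act_WE [RHS]act_WE act_WE !act_tabM -!invMg; reflexivity. Qed.

Lemma act_W_linear d (s : 'S_d) : linear (act_W s).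
Proof.
move=> a F G; apply/ffunP=> T.
rewrite act_WE [LHS]ffunE [in RHS]ffunE [in RHS]ffunE act_WE act_WE.
rewrite [X in X + _]ffunE; reflexivity.
Qed.

HB.instance Definition _ d (s : 'S_d) :=
  GRing.isLinear.Build algC (Wspace d) (Wspace d) _ (act_W s) (act_W_linear s).

Definition avg d (F : Wspace d) : Wspace d := \sum_(s : 'S_d) act_W s F.

Lemma avg_linear d : linear (@avg d).
Proof.
move=> a F G; rewrite /avg scaler_sumr -big_split /=; apply: eq_bigr => s _.
by rewrite linearP.
Qed.

HB.instance Definition _ d :=
  GRing.isLinear.Build algC (Wspace d) (Wspace d) _ (@avg d) (@avg_linear d).

Lemma avg_act d (s : 'S_d) F : avg (act_W s F) = avg F.
Proof.
rewrite /avg [RHS](reindex_inj (mulgI s)) /=; apply: eq_bigr => s' _.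
by rewrite act_WM.
Qed.

Local Close Scope ring_scope.

Import GRing.Theory.

Lemma card_nth (T : eqType) (s : seq T) x0 d (P : pred T) : size s = d ->
  #|[set b : 'I_d | P (nth x0 s b)]| = count P s.
Proof.
move=> <-; rewrite cardsE -sum1_card.
rewrite (eq_bigl (fun b : 'I_(size s) => P (nth x0 s b))); last by [].
rewrite -(big_mkord (fun i => P (nth x0 s i)) (fun _ => 1)) sum1_count.
by rewrite /index_iota subn0 -[in RHS](mkseq_nth x0 s) /mkseq count_map.
Qed.

Definition rowl (la : seq nat) (i : nat) : seq (nat * nat) :=
  [seq (i, j) | j <- iota 0 (nth 0 la i)].

Lemma cellsE la : cells la = flatten [seq rowl la i | i <- iota 0 (size la)].
Proof. by []. Qed.

Lemma mem_cells la a j : ((a, j) \in cells la) = (a < size la) && (j < nth 0 la a).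
Proof.
rewrite cellsE; apply/flatten_mapP/andP => [[i]|[ha hj]].
  rewrite mem_iota add0n => /andP[_ hi] /mapP[j' hj' [-> ->]].
  by move: hj'; rewrite mem_iota add0n => /andP[_ ->].
exists a; first by rewrite mem_iota add0n.
by apply/mapP; exists j => //; rewrite mem_iota add0n.
Qed.

Lemma uniq_flat la (s : seq nat) : uniq s -> uniq (flatten [seq rowl la i | i <- s]).
Proof.
elim: s => [|i s IH] //= /andP[his us]; rewrite cat_uniq IH // andbT.
rewrite map_inj_uniq ?iota_uniq //=; last by move=> x y [].
apply/hasPn => c /flatten_mapP[i' hi' /mapP[j _ ->]].
apply/mapP => -[j' _ [ei _]]; by rewrite -ei hi' in his.
Qed.

Lemma uniq_cells la : uniq (cells la).
Proof. by rewrite cellsE uniq_flat // iota_uniq. Qed.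

Lemma size_cells la : size (cells la) = sumn la.
Proof.
rewrite cellsE size_flatten /shape -map_comp.
rewrite (eq_map (fun i => size_map _ _)) /=.
rewrite (eq_map (fun i => size_iota _ _)) /=.
by rewrite -/(mkseq _ _) mkseq_nth.
Qed.

Lemma count_col la j : count (fun c : nat * nat => c.2 == j) (cells la) = count (fun r => j < r) la.
Proof.
rewrite cellsE count_flatten -map_comp.
have -> : [seq count (fun c : nat * nat => c.2 == j) (rowl la i) | i <- iota 0 (size la)] =
          [seq nat_of_bool (j < nth 0 la i) | i <- iota 0 (size la)].
  apply: eq_map => i /=; rewrite count_map /=.
  rewrite (eq_count (a2 := pred1 j)) //.
  rewrite count_uniq_mem ?iota_uniq // mem_iota add0n //.
rewrite sumn_count.
by rewrite -[in RHS](mkseq_nth 0 la) /mkseq count_map.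
Qed.

Lemma geq_trans : transitive (geq : rel nat).
Proof. by move=> y x z /= h1 h2; apply: leq_trans h2 h1. Qed.

Lemma sorted_all_le x l : sorted geq (x :: l) -> forall y, y \in l -> y <= x.
Proof. by move=> /(order_path_min geq_trans) /allP h y /h. Qed.

Lemma count_gt_nth la a j : sorted geq la ->
  (a < count (fun r => j < r) la) = (j < nth 0 la a).
Proof.
elim: la a => [|x l IH] a /=; first by rewrite nth_nil.
move=> hs; have hl : sorted geq l by apply: (path_sorted hs).
have hle := sorted_all_le hs.
case: (ltnP j x) => hjx.
  case: a => [|a] //=; rewrite add1n ltnS; exact: IH.
have -> : count (fun r => j < r) l = 0.
  apply/eqP; rewrite -leqn0 leqNgt -has_count; apply/hasPn => y /hle hy.
  rewrite -leqNgt; exact: leq_trans hy hjx.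
case: a => [|a] /=; first by rewrite [RHS]ltnNge hjx.
case: (ltnP a (size l)) => ha.
  by rewrite [RHS]ltnNge (leq_trans (hle _ (mem_nth 0 ha)) hjx).
by rewrite nth_default.
Qed.

Lemma nth_le_head la a : sorted geq la -> nth 0 la a <= head 0 la.
Proof.
case: la => [|x l] //= hs; first by rewrite nth_nil.
case: a => [|a] //=; case: (ltnP a (size l)) => ha.
  exact: (sorted_all_le hs (mem_nth 0 ha)).
by rewrite nth_default.
Qed.

Lemma count_lt_iota m h : count (fun j => j < m) (iota 0 h) = minn m h.
Proof.
elim: h => [|h IH]; first by rewrite minn0.
rewrite -addn1 iotaD count_cat IH /= add0n addn0.
case: (ltnP h m) => hm /=; lia.
Qed.

Lemma conj_sorted la : sorted geq (conj_part la).
Proof.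
rewrite /conj_part sorted_map; apply: sub_sorted (iota_sorted 0 _) => i j hij /=.
by apply: sub_count => r /= h; apply: leq_ltn_trans hij h.
Qed.

Lemma conj_conj la : sorted geq la -> all (fun x => 0 < x) la ->
  conj_part (conj_part la) = la.
Proof.
move=> hs hp.
case E: la => [|x l]; first by [].
rewrite -E.
have hx : 0 < head 0 la by rewrite E; move: hp; rewrite E /= => /andP[].
have hh : head 0 (conj_part la) = size la.
  rewrite /conj_part; case: (head 0 la) hx => [|h] //= _.
  by rewrite -count_predT; apply: eq_in_count => y /=; move/allP: hp => /(_ y).
rewrite {1}/conj_part hh.
rewrite -[RHS](mkseq_nth 0 la) /mkseq; apply: eq_map => a /=.
rewrite /conj_part count_map /=.
rewrite (eq_count (a2 := fun j => j < nth 0 la a)); last first.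
  by move=> j /=; apply: count_gt_nth.
by rewrite count_lt_iota; apply/minn_idPl; apply: nth_le_head.
Qed.

Lemma slice_filter la M : sorted geq la -> head 0 la <= M ->
  [seq m <- [seq count (fun r => i < r) la | i <- iota 0 M] | 0 < m] = conj_part la.
Proof.
move=> hs hM; rewrite -(subnKC hM) iotaD map_cat filter_cat add0n.
rewrite [X in _ ++ X](eq_in_filter (a2 := pred0)) ?filter_pred0 ?cats0; last first.
  move=> m /mapP[i]; rewrite mem_iota => /andP[hi _] -> /=.
  rewrite -has_count; apply/negbTE/hasPn => r hr; rewrite -leqNgt.
  have : r <= head 0 la.
    by have := nth_le_head (index r la) hs; rewrite nth_index.
  by move=> h; apply: leq_trans h hi.
apply/all_filterP/allP => m /mapP[i]; rewrite mem_iota add0n => /andP[_ hi] ->.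
by rewrite count_gt_nth // nth0 (leq_trans _ (nth_le_head 0 hs)) //.
Qed.


Import GRing.Theory.

Lemma part_sorted n d la : is_part_of n d la -> sorted geq la.
Proof. by case/and4P. Qed.
Lemma part_pos n d la : is_part_of n d la -> all (fun x => 0 < x) la.
Proof. by case/and4P. Qed.
Lemma part_size n d la : is_part_of n d la -> size (cells la) = d.
Proof. by case/and4P => _ _ /eqP <- _; rewrite size_cells. Qed.

Lemma cell_nth_mem n d la (b : 'I_d) : is_part_of n d la ->
  (rowb la b, colb la b) \in cells la.
Proof.
move=> hp; rewrite /rowb /colb -surjective_pairing mem_nth //.
by rewrite (part_size hp).
Qed.

Lemma colb_lt n d la (b : 'I_d) : is_part_of n d la -> colb la b < head 0 la.
Proof.
move=> hp; have := cell_nth_mem b hp; rewrite mem_cells => /andP[_ h].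
exact: leq_trans h (nth_le_head _ (part_sorted hp)).
Qed.

Lemma cell_inj n d la (b b' : 'I_d) : is_part_of n d la ->
  rowb la b = rowb la b' -> colb la b = colb la b' -> b = b'.
Proof.
move=> hp hr hc; apply/val_inj/eqP.
rewrite -(nth_uniq (0,0) _ _ (uniq_cells la)) ?(part_size hp) ?ltn_ord //.
by apply/eqP; move: hr hc; rewrite /rowb /colb => hr hc; rewrite [nth _ _ b]surjective_pairing [nth _ _ b']surjective_pairing hr hc.
Qed.

Lemma cell_exists n d la a j : is_part_of n d la -> (a, j) \in cells la ->
  exists b : 'I_d, rowb la b = a /\ colb la b = j.
Proof.
move=> hp hm; have hb : index (a, j) (cells la) < d by rewrite -(part_size hp) index_mem.
by exists (Ordinal hb); rewrite /rowb /colb /= nth_index.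
Qed.

Lemma card_col n d la j : is_part_of n d la ->
  #|[set b : 'I_d | colb la b == j]| = count (fun r => j < r) la.
Proof.
move=> hp; rewrite -count_col.
exact: (card_nth (0,0) (fun c : nat * nat => c.2 == j) (part_size hp)).
Qed.

Lemma card_set_perm d (p : 'S_d) (Q : pred 'I_d) :
  #|[set x : 'I_d | Q (p^-1 x)%g]| = #|[set b : 'I_d | Q b]|.
Proof.
rewrite -[RHS](card_imset _ (@perm_inj _ p)); apply: eq_card => x; rewrite !inE.
apply/idP/imsetP => [h|[b]]; first by exists (p^-1 x)%g; rewrite ?inE ?permKV.
by rewrite inE => hb ->; rewrite permK.
Qed.

Lemma card_slice_img (T U : finType) (g : T -> U) (P : pred U) : injective g ->
  #|[set y in [set g x | x in T] | P y]| = #|[set x | P (g x)]|.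
Proof.
move=> gi; rewrite -[RHS](card_imset _ gi); apply: eq_card => y; rewrite !inE.
apply/andP/imsetP => [[/imsetP[x _ ->] h]|[x]]; first by exists x; rewrite ?inE.
by rewrite inE => h ->; split => //; apply: imset_f.
Qed.

Lemma design_type_eq l1 l2 l3 (H : design l1 l2 l3) k n d la :
  is_part_of n d la -> head 0 la <= maxn l1 (maxn l2 l3) ->
  (forall i, #|[set x in H | Defs.coord k x == i]| = count (fun r => i < r) la) ->
  design_type H k = la.
Proof.
move=> hp hM hc; rewrite /design_type /slice_sizes.
rewrite (eq_map hc) slice_filter ?(part_sorted hp) //.
rewrite (sorted_sort geq_trans (conj_sorted la)).
by rewrite conj_conj ?(part_sorted hp) ?(part_pos hp).
Qed.


Import GRing.Theory.

Definition trip d := ('S_d * 'S_d * 'S_d)%type.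

Definition gpt n d la1 la2 la3 (hp1 : is_part_of n d la1) (hp2 : is_part_of n d la2)
  (hp3 : is_part_of n d la3) (t : trip d) (x : 'I_d) :
  'I_(head 0 la1) * 'I_(head 0 la2) * 'I_(head 0 la3) :=
  (Ordinal (colb_lt (t.1.1^-1 x)%g hp1), Ordinal (colb_lt (t.1.2^-1 x)%g hp2),
   Ordinal (colb_lt (t.2^-1 x)%g hp3)).

Definition Hd n d la1 la2 la3 (hp1 : is_part_of n d la1) (hp2 : is_part_of n d la2)
  (hp3 : is_part_of n d la3) (t : trip d) : design (head 0 la1) (head 0 la2) (head 0 la3) :=
  [set gpt hp1 hp2 hp3 t x | x in 'I_d].

Lemma slice_Hd n d la1 la2 la3 (hp1 : is_part_of n d la1) (hp2 : is_part_of n d la2)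
  (hp3 : is_part_of n d la3) (t : trip d) k la (p : 'S_d) (hp : is_part_of n d la) :
  injective (gpt hp1 hp2 hp3 t) ->
  (forall x, Defs.coord k (gpt hp1 hp2 hp3 t x) = colb la (p^-1 x)%g) ->
  forall i, #|[set y in Hd hp1 hp2 hp3 t | Defs.coord k y == i]| = count (fun r => i < r) la.
Proof.
move=> gi hk i; rewrite /Hd card_slice_img //.
rewrite (eq_card (B := [set x | colb la (p^-1 x)%g == i])); last first.
  by move=> x; rewrite !inE hk.
by rewrite (card_set_perm p (fun b => colb la b == i)) (card_col _ hp).
Qed.

Lemma Hd_type n d la1 la2 la3 (hp1 : is_part_of n d la1) (hp2 : is_part_of n d la2)
  (hp3 : is_part_of n d la3) (t : trip d) :
  injective (gpt hp1 hp2 hp3 t) -> has_type (Hd hp1 hp2 hp3 t) la1 la2 la3.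
Proof.
move=> gi; apply/and3P; split; apply/eqP.
- apply: (design_type_eq (la := la1) hp1); first by rewrite leq_maxl.
  by apply: (slice_Hd (p := t.1.1)).
- apply: (design_type_eq (la := la2) hp2); first by rewrite leq_max leq_maxl orbT.
  by apply: (slice_Hd (p := t.1.2)).
- apply: (design_type_eq (la := la3) hp3); first by rewrite leq_max leq_maxr orbT.
  by apply: (slice_Hd (p := t.2)).
Qed.


Import GRing.Theory.
Local Open Scope ring_scope.

Definition Xt la1 la2 la3 d (t : trip d) : Wspace d := X3 la1 la2 la3 t.1.1 t.1.2 t.2.

Lemma tens3Z d (a b c : algC) (f g h : Mspace d) :
  tens3 (a *: f) (b *: g) (c *: h) = (a * b * c) *: tens3 f g h.
Proof.
apply/ffunP=> T; rewrite [RHS]ffunE !tens3E !ffunE.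
rewrite /GRing.scale /=; ring.
Qed.

Definition tmul d (t : trip d) (s : 'S_d) : trip d := (t.1.1 * s, t.1.2 * s, t.2 * s)%g.

Lemma avg_tmul la1 la2 la3 d (t : trip d) s :
  avg (Xt la1 la2 la3 (tmul t s)) = avg (Xt la1 la2 la3 t).
Proof. by rewrite /Xt /tmul /= -act_X3 avg_act. Qed.

Lemma Xt_col la1 la2 la3 d (t : trip d) (c1 c2 c3 : 'S_d) :
  colpres la1 c1 -> colpres la2 c2 -> colpres la3 c3 ->
  Xt la1 la2 la3 (c1 * t.1.1, c2 * t.1.2, c3 * t.2)%g =
  (sgnp c1 * sgnp c2 * sgnp c3) *: Xt la1 la2 la3 t.
Proof. by move=> h1 h2 h3; rewrite /Xt /X3 /= !pt_col // tens3Z. Qed.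

Lemma Xt_row la1 la2 la3 d (t : trip d) (r1 r2 r3 : 'S_d) :
  rowpres la1 r1 -> rowpres la2 r2 -> rowpres la3 r3 ->
  colmap la1 r1 -> colmap la2 r2 -> colmap la3 r3 ->
  Xt la1 la2 la3 (r1 * t.1.1, r2 * t.1.2, r3 * t.2)%g = Xt la1 la2 la3 t.
Proof. by move=> h1 h2 h3 k1 k2 k3; rewrite /Xt /X3 /= !pt_row. Qed.

Lemma rowpresV la d (q : 'S_d) : rowpres la q -> rowpres la q^-1%g.
Proof. by move=> /rowpresP h; apply/rowpresP=> b; rewrite -{2}(permKV q b) h. Qed.

Lemma colmapV la d (q : 'S_d) : colmap la q -> colmap la q^-1%g.
Proof. by move=> h x y; rewrite -h !permKV. Qed.

Lemma conj_colpres la d (p : 'S_d) x y : colb la (p^-1 x)%g = colb la (p^-1 y)%g ->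
  colpres la (p * tperm x y * p^-1)%g.
Proof.
move=> hxy; apply/colpresP => b; rewrite !permM.
case: (tpermP x y (p b)) => [hb|hb|hx hy] //.
- by rewrite -hxy -hb permK.
- by rewrite hxy -hb permK.
- by rewrite permK.
Qed.

Lemma sgn_conj_tperm d (p : 'S_d) x y : x != y -> sgnp (p * tperm x y * p^-1)%g = -1.
Proof.
move=> hxy; rewrite /sgnp !odd_permM odd_permV odd_tperm hxy.
by case: (odd_perm p).
Qed.

Lemma avg_noninj la1 la2 la3 d (t : trip d) x y : x != y ->
  colb la1 (t.1.1^-1 x)%g = colb la1 (t.1.1^-1 y)%g ->
  colb la2 (t.1.2^-1 x)%g = colb la2 (t.1.2^-1 y)%g ->
  colb la3 (t.2^-1 x)%g = colb la3 (t.2^-1 y)%g ->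
  avg (Xt la1 la2 la3 t) = 0.
Proof.
move=> hxy h1 h2 h3.
have e : forall p : 'S_d, (p * tperm x y = (p * tperm x y * p^-1) * p)%g.
  by move=> p; rewrite mulgKV.
have E : Xt la1 la2 la3 (tmul t (tperm x y)) = - Xt la1 la2 la3 t.
  rewrite /tmul e [(t.1.2 * _)%g]e [(t.2 * _)%g]e Xt_col ?conj_colpres //.
  by rewrite !sgn_conj_tperm // mulrNN !mul1r scaleN1r.
have := avg_tmul la1 la2 la3 t (tperm x y); rewrite E linearN => h.
have : avg (Xt la1 la2 la3 t) *+ 2 = 0 by rewrite mulr2n -{1}h addNr.
rewrite -scaler_nat => /eqP; rewrite scaler_eq0 => /orP[|/eqP //].
by rewrite Num.Theory.pnatr_eq0.
Qed.

Local Close Scope ring_scope.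

Import GRing.Theory.

Lemma exists_rowperm n d la (hp : is_part_of n d la) (pi : 'S_(head 0 la)) :
  (forall j : 'I_(head 0 la), count (fun r => pi j < r) la = count (fun r => j < r) la) ->
  exists r : 'S_d, [/\ rowpres la r, colmap la r &
    forall b, colb la (r b) = pi (Ordinal (colb_lt b hp))].
Proof.
move=> hcnt.
have hex : forall b : 'I_d, exists b' : 'I_d,
    (rowb la b' == rowb la b) && (colb la b' == pi (Ordinal (colb_lt b hp))).
  move=> b.
  have hm := cell_nth_mem b hp; move: hm; rewrite !mem_cells => /andP[hr hc].
  have hm2 : (rowb la b, val (pi (Ordinal (colb_lt b hp)))) \in cells la.
    rewrite mem_cells hr /= -(count_gt_nth _ _ (part_sorted hp)) hcnt.
    by rewrite count_gt_nth ?(part_sorted hp).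
  have [b' [e1 e2]] := cell_exists hp hm2.
  by exists b'; rewrite e1 e2 !eqxx.
pose f b := xchoose (hex b).
have hf : forall b, (rowb la (f b) == rowb la b) && (colb la (f b) == pi (Ordinal (colb_lt b hp))).
  by move=> b; apply: (xchooseP (hex b)).
have finj : injective f.
  move=> b1 b2 e; have := hf b1; have := hf b2; rewrite e => /andP[/eqP r2 /eqP c2] /andP[/eqP r1 /eqP c1].
  apply: (cell_inj hp); first by rewrite -r1 -r2.
  have : pi (Ordinal (colb_lt b1 hp)) = pi (Ordinal (colb_lt b2 hp)) by apply: val_inj; rewrite /= -c1 -c2.
  by move/perm_inj => /(congr1 val).
exists (perm finj); split.
- by apply/rowpresP => b; rewrite permE; have /andP[/eqP -> _] := hf b.
- move=> x y; rewrite !permE.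
  have /andP[_ /eqP ->] := hf x; have /andP[_ /eqP ->] := hf y.
  apply/eqP/eqP => [/val_inj/perm_inj /(congr1 val) //|e].
  by congr (val (pi _)); apply: val_inj.
- by move=> b; rewrite permE; have /andP[_ /eqP ->] := hf b.
Qed.


Import GRing.Theory.

Lemma card_slice_imgA (T U : finType) (g : T -> U) (A : {set T}) (P : pred U) : injective g ->
  #|[set y in g @: A | P y]| = #|[set x in A | P (g x)]|.
Proof.
move=> gi; rewrite -[RHS](card_imset _ gi); apply: eq_card => y; rewrite !inE.
apply/andP/imsetP => [[/imsetP[x hx ->] h]|[x]]; first by exists x; rewrite ?inE ?hx.
by rewrite inE => /andP[hx h] ->; split => //; apply: imset_f.
Qed.

Lemma coord_step n d la (hp : is_part_of n d la) (p p' r U : 'S_d) (pi : 'S_(head 0 la)) :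
  (forall b, colb la (r b) = pi (Ordinal (colb_lt b hp))) ->
  (forall x, colb la (p'^-1 x)%g = pi (Ordinal (colb_lt (p^-1 (U x))%g hp))) ->
  colpres la (p' * (r^-1 * (p * U^-1))^-1)%g.
Proof.
move=> hr hx; apply/colpresP => b.
rewrite !invMg !invgK !permM hr.
have -> : Ordinal (colb_lt (p^-1 (U (p' b)))%g hp) = Ordinal (colb_lt (p^-1 (U (p' b)))%g hp) by [].
by rewrite -hx permK.
Qed.

Definition pih l1 l2 l3 (p1 : 'S_l1) (p2 : 'S_l2) (p3 : 'S_l3) (x : 'I_l1 * 'I_l2 * 'I_l3) :
  'I_l1 * 'I_l2 * 'I_l3 := (p1 x.1.1, p2 x.1.2, p3 x.2).

Lemma pih_inj l1 l2 l3 (p1 : 'S_l1) (p2 : 'S_l2) (p3 : 'S_l3) : injective (pih p1 p2 p3).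
Proof.
move=> [[a b] c] [[a' b'] c'] [/perm_inj -> /perm_inj -> /perm_inj ->] //.
Qed.

Lemma act_designE l1 l2 l3 (p1 : 'S_l1) (p2 : 'S_l2) (p3 : 'S_l3) H :
  act_design p1 p2 p3 H = pih p1 p2 p3 @: H.
Proof. by []. Qed.

Lemma count_pres n d la1 la2 la3 (hp1 : is_part_of n d la1) (hp2 : is_part_of n d la2)
  (hp3 : is_part_of n d la3) (t t' : trip d) p1 p2 p3 :
  injective (gpt hp1 hp2 hp3 t) -> injective (gpt hp1 hp2 hp3 t') ->
  Hd hp1 hp2 hp3 t' = act_design p1 p2 p3 (Hd hp1 hp2 hp3 t) ->
  [/\ forall j, count (fun r => p1 j < r) la1 = count (fun r => j < r) la1,
      forall j, count (fun r => p2 j < r) la2 = count (fun r => j < r) la2 &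
      forall j, count (fun r => p3 j < r) la3 = count (fun r => j < r) la3].
Proof.
move=> gi gi' E; split => j.
- rewrite -(slice_Hd (k := 1) (p := t'.1.1) hp1 gi') // -(slice_Hd (k := 1) (p := t.1.1) hp1 gi) //.
  rewrite E act_designE card_slice_imgA; last exact: pih_inj.
  apply: eq_card => y; rewrite !inE.
  by rewrite /Defs.coord /= (inj_eq val_inj) (inj_eq perm_inj) (inj_eq val_inj).
- rewrite -(slice_Hd (k := 2) (p := t'.1.2) hp2 gi') // -(slice_Hd (k := 2) (p := t.1.2) hp2 gi) //.
  rewrite E act_designE card_slice_imgA; last exact: pih_inj.
  apply: eq_card => y; rewrite !inE.
  by rewrite /Defs.coord /= (inj_eq val_inj) (inj_eq perm_inj) (inj_eq val_inj).
- rewrite -(slice_Hd (k := 3) (p := t'.2) hp3 gi') // -(slice_Hd (k := 3) (p := t.2) hp3 gi) //.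
  rewrite E act_designE card_slice_imgA; last exact: pih_inj.
  apply: eq_card => y; rewrite !inE.
  by rewrite /Defs.coord /= (inj_eq val_inj) (inj_eq perm_inj) (inj_eq val_inj).
Qed.

Lemma key n d la1 la2 la3 (hp1 : is_part_of n d la1) (hp2 : is_part_of n d la2)
  (hp3 : is_part_of n d la3) (t t' : trip d) p1 p2 p3 :
  injective (gpt hp1 hp2 hp3 t) -> injective (gpt hp1 hp2 hp3 t') ->
  Hd hp1 hp2 hp3 t' = act_design p1 p2 p3 (Hd hp1 hp2 hp3 t) ->
  exists c : algC, avg (Xt la1 la2 la3 t') = (c *: avg (Xt la1 la2 la3 t))%R.
Proof.
move=> gi gi' E.
have [c1 c2 c3] := count_pres gi gi' E.
have [r1 [rr1 rc1 hr1]] := exists_rowperm hp1 c1.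
have [r2 [rr2 rc2 hr2]] := exists_rowperm hp2 c2.
have [r3 [rr3 rc3 hr3]] := exists_rowperm hp3 c3.
have hex : forall x, exists y, gpt hp1 hp2 hp3 t' x == pih p1 p2 p3 (gpt hp1 hp2 hp3 t y).
  move=> x; have : gpt hp1 hp2 hp3 t' x \in Hd hp1 hp2 hp3 t' by apply: imset_f.
  rewrite E act_designE => /imsetP[z /imsetP[y _ ->] ->].
  by exists y.
pose u x := xchoose (hex x).
have hu : forall x, gpt hp1 hp2 hp3 t' x = pih p1 p2 p3 (gpt hp1 hp2 hp3 t (u x)).
  by move=> x; apply/eqP; apply: (xchooseP (hex x)).
have uinj : injective u.
  by move=> x y e; apply: gi'; rewrite !hu e.
pose U := perm uinj.
have hU : forall x, U x = u x by move=> x; rewrite permE.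
have e1 : forall x, colb la1 (t'.1.1^-1 x)%g = p1 (Ordinal (colb_lt (t.1.1^-1 (U x))%g hp1)).
  by move=> x; rewrite hU; have := congr1 (fun z => val z.1.1) (hu x).
have e2 : forall x, colb la2 (t'.1.2^-1 x)%g = p2 (Ordinal (colb_lt (t.1.2^-1 (U x))%g hp2)).
  by move=> x; rewrite hU; have := congr1 (fun z => val z.1.2) (hu x).
have e3 : forall x, colb la3 (t'.2^-1 x)%g = p3 (Ordinal (colb_lt (t.2^-1 (U x))%g hp3)).
  by move=> x; rewrite hU; have := congr1 (fun z => val z.2) (hu x).
have k1 := coord_step hr1 e1.
have k2 := coord_step hr2 e2.
have k3 := coord_step hr3 e3.
set w1 := (r1^-1 * (t.1.1 * U^-1))%g in k1.
set w2 := (r2^-1 * (t.1.2 * U^-1))%g in k2.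
set w3 := (r3^-1 * (t.2 * U^-1))%g in k3.
have Et : t' = ((t'.1.1 * w1^-1) * w1, (t'.1.2 * w2^-1) * w2, (t'.2 * w3^-1) * w3)%g.
  by rewrite !mulgKV; case: (t') => [[]].
exists (sgnp (t'.1.1 * w1^-1)%g * sgnp (t'.1.2 * w2^-1)%g * sgnp (t'.2 * w3^-1)%g)%R.
rewrite {1}Et.
have -> := @Xt_col la1 la2 la3 d (w1, w2, w3) _ _ _ k1 k2 k3.
rewrite linearZ /=; congr (_ *: _)%R.
rewrite /w1 /w2 /w3.
rewrite (@Xt_row la1 la2 la3 d (t.1.1 * U^-1, t.1.2 * U^-1, t.2 * U^-1)%g) ?rowpresV ?colmapV //.
  exact: (avg_tmul la1 la2 la3 t U^-1%g).
all: exact: colmapV.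
Qed.


Import GRing.Theory.

Lemma act_design1 l1 l2 l3 (H : design l1 l2 l3) : act_design 1 1 1 H = H.
Proof.
rewrite act_designE -[RHS]imset_id; apply: eq_imset => -[[a b] c].
by rewrite /pih !perm1.
Qed.

Lemma act_designV l1 l2 l3 (p1 : 'S_l1) (p2 : 'S_l2) (p3 : 'S_l3) H :
  act_design p1^-1 p2^-1 p3^-1 (act_design p1 p2 p3 H) = H.
Proof.
rewrite !act_designE -imset_comp -[RHS]imset_id; apply: eq_imset => -[[a b] c].
by rewrite /pih /= !permK.
Qed.

Lemma span_avg d (X : seq (Wspace d)) F : F \in <<X>>%VS ->
  avg F \in <<[seq avg x | x <- X]>>%VS.
Proof.
move=> hF; have := memv_img (linfun (@avg d)) hF.
by rewrite limg_span lfunE (eq_map (lfunE (@avg d))).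
Qed.

Theorem mainTheorem8 (n d : nat) (la1 la2 la3 : seq nat) :
  is_part_of n d la1 -> is_part_of n d la2 -> is_part_of n d la3 ->
  kronecker la1 la2 la3 <= num_orbits la1 la2 la3.
Proof.
move=> hp1 hp2 hp3.
have hd : sumn la1 = d by case/and4P: hp1 => _ _ /eqP.
rewrite /kronecker /= hd.
set V := (_ :&: _)%VS.
pose Ys := [seq avg (Xt la1 la2 la3 t) | t <- enum [set: trip d]].
have S1 : (V <= <<Ys>>)%VS.
  apply/subvP => F /memv_capP[hS hI].
  have hfix : forall s : 'S_d, act_W s F = F.
    move=> s; have : F \in fixedSpace (linfun (act_W s)).
      by move: hI; apply/subvP; apply: (bigcapv_inf s) => //; apply: subv_refl.
    by move/fixedSpaceP; rewrite lfunE.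
  have havg : avg F = ((#|'S_d|%:R)%R *: F)%R.
    by rewrite /avg (eq_bigr (fun _ => F)) ?sumr_const ?scaler_nat // => s _; rewrite hfix.
  have hn : ((#|'S_d|%:R)%R : algC) != 0%R.
    by rewrite Num.Theory.pnatr_eq0 -lt0n; apply/card_gt0P; exists 1%g.
  have -> : F = ((#|'S_d|%:R)^-1 *: avg F)%R by rewrite havg scalerA mulVf ?scale1r.
  apply: memvZ.
  have := span_avg hS; apply/subvP; apply/span_subvP => _ /mapP[x hx ->].
  move: hx => /flatten_mapP[q1 _ /flatten_mapP[q2 _ /mapP[q3 _ ->]]].
  apply: memv_span; apply/mapP; exists (q1, q2, q3); first by rewrite mem_enum inE.
  by [].
rewrite /num_orbits /=.
set D := [set H : design _ _ _ | has_type H la1 la2 la3].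
pose orb (H : design (head 0 la1) (head 0 la2) (head 0 la3)) :=
  [set H' in D | [exists p1 : 'S_(head 0 la1), exists p2 : 'S_(head 0 la2),
     exists p3 : 'S_(head 0 la3), H' == act_design p1 p2 p3 H]].
set Orb := [set _ | H in D].
have Orbe : Orb = [set orb H | H in D] by [].
pose w (Ob : {set design (head 0 la1) (head 0 la2) (head 0 la3)}) : Wspace d :=
  if [pick t : trip d | injectiveb (gpt hp1 hp2 hp3 t) && (Hd hp1 hp2 hp3 t \in Ob)] is Some t
  then avg (Xt la1 la2 la3 t) else 0%R.
pose Zs := [seq w Ob | Ob <- enum Orb].
have S2 : (<<Ys>> <= <<Zs>>)%VS.
  apply/span_subvP => _ /mapP[t _ ->].
  case: (injectiveP (gpt hp1 hp2 hp3 t)) => gi; last first.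
    have /injectivePn[x [y hxy exy]] : ~~ injectiveb (gpt hp1 hp2 hp3 t) by apply/injectiveP.
    rewrite (avg_noninj hxy) ?mem0v //.
    - exact: (congr1 (fun z => val z.1.1) exy).
    - exact: (congr1 (fun z => val z.1.2) exy).
    - exact: (congr1 (fun z => val z.2) exy).
  have HD : Hd hp1 hp2 hp3 t \in D by rewrite inE Hd_type.
  have Hin : Hd hp1 hp2 hp3 t \in orb (Hd hp1 hp2 hp3 t).
    rewrite inE HD /=; apply/existsP; exists 1%g; apply/existsP; exists 1%g.
    by apply/existsP; exists 1%g; rewrite act_design1.
  have OI : orb (Hd hp1 hp2 hp3 t) \in enum Orb by rewrite mem_enum Orbe imset_f.
  have wO : w (orb (Hd hp1 hp2 hp3 t)) \in <<Zs>>%VS by apply: memv_span; apply: map_f.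
  move: wO; rewrite /w; case: pickP => [t0 /andP[/injectiveP gi0 hin] | hnone]; last first.
    by have := hnone t; rewrite Hin andbT; move/injectiveP: gi => ->.
  move: hin; rewrite inE => /andP[_ /existsP[q1 /existsP[q2 /existsP[q3 /eqP E]]]] hw.
  have E' : Hd hp1 hp2 hp3 t = act_design q1^-1 q2^-1 q3^-1 (Hd hp1 hp2 hp3 t0).
    by rewrite E act_designV.
  have [c ->] := key gi0 gi E'.
  exact: memvZ.
apply: leq_trans (dimvS (subv_trans S1 S2)) _.
by rewrite (leq_trans (dim_span _)) // size_map -cardE.
Qed.
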